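(* Let $b$ be a finite Blaschke product with $N$ zeros. If $S^{(1)}=\{S^{(1)}_i\}_{i=1}^N$ and $S^{(2)}=\{S^{(2)}_i\}_{i=1}^N$ are Cuntz families on $L^2(\mathbb{T})$ with $\alpha_{S^{(k)}}\circ\pi=\pi\circ\beta$ for $k=1,2$, then there is a unitary matrix $(u_{ij})\in M_N(L^\infty(\mathbb{T}))$ such that $$S^{(2)}_j=\sum_{i=1}^N S^{(1)}_i\pi(u_{ij}),\qquad j=1,\dots,N.$$ Conversely, if $S^{(1)},S^{(2)}$ are Cuntz families on $L^2(\mathbb{T})$ linked by this equation for some unitary $(u_{ij})\in M_N(L^\infty(\mathbb{T}))$, then $\alpha_{S^{(1)}}\circ\pi=\pi\circ\beta$ if and only if $\alpha_{S^{(2)}}\circ\pi=\pi\circ\beta$. Further, in that situation $\alpha_{S^{(1)}}=\alpha_{S^{(2)}}$ on $B(L^2(\mathbb{T}))$ if and only if $(u_{ij})$ is a unitary matrix of constant functions.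
   Context: $b=\prod_{j=1}^N b_{\alpha_j}$ is a finite Blaschke product with $N$ zeros in $\mathbb{D}$ ($b_w(z)=\frac{|w|}{w}\frac{w-z}{1-\overline{w}z}$, $b_0(z)=z$); $\beta(\varphi)=\varphi\circ b$ on $L^\infty(\mathbb{T})$. $\pi(\varphi)$ is multiplication by $\varphi$ on $L^2(\mathbb{T})$. A Cuntz family $\{S_i\}_{i=1}^N$ on a Hilbert space $H$ consists of isometries with $S_i^*S_j=\delta_{ij}I$ and $\sum_iS_iS_i^*=I$, and $\alpha_S(T)=\sum_iS_iTS_i^*$ for $T\in B(H)$. A matrix $U\in M_N(L^\infty(\mathbb{T}))$ is unitary if $UU^*=U^*U=I$. *)

(* Defs.v *)
From mathcomp Require Import all_boot all_algebra.
From mathcomp Require Import all_classical all_reals all_analysis.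
From mathcomp Require Import complex.
Import GRing.Theory Num.Theory.
Set Implicit Arguments. Unset Strict Implicit. Unset Printing Implicit Defensive.
Local Open Scope ring_scope.
Local Open Scope complex_scope.
Local Open Scope classical_set_scope.

(* Functions "on T" are represented as functions C -> C; only their values
   on the unit circle matter.  The measure on T is (normalised-free)
   Lebesgue measure dt on [0, 2pi] (normalisation is irrelevant here). *)

Definition circ (R : realType) (t : R) : R[i] := cos t +i* sin t.

Definition Tdom (R : realType) : set R := `[0, 2 * pi]%classic.
Arguments Tdom : clear implicits.

Definition fn (R : realType) := R[i] -> R[i].

Definition reT (R : realType) (f : fn R) : R -> R := fun t => complex.Re (f (circ t)).
Definition imT (R : realType) (f : fn R) : R -> R := fun t => complex.Im (f (circ t)).

Definition cmeas (R : realType) (f : fn R) : Prop :=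
  measurable_fun (Tdom R) (reT f) /\ measurable_fun (Tdom R) (imT f).

Definition abs2T (R : realType) (f : fn R) : R -> R :=
  fun t => reT f t ^+ 2 + imT f t ^+ 2.

Definition aeq (R : realType) (f g : fn R) : Prop :=
  {ae (@lebesgue_measure R), forall t, Tdom R t -> f (circ t) = g (circ t)}.

Definition L2 (R : realType) (f : fn R) : Prop :=
  cmeas f /\
  (\int[@lebesgue_measure R]_(t in Tdom R) (abs2T f t)%:E < +oo)%E.

Definition Linf (R : realType) (f : fn R) : Prop :=
  cmeas f /\ exists M : R,
    {ae (@lebesgue_measure R), forall t, Tdom R t -> abs2T f t <= M}.

Definition sqnorm (R : realType) (f : fn R) : R :=
  Rintegral (@lebesgue_measure R) (Tdom R) (abs2T f).

Definition ip (R : realType) (f g : fn R) : R[i] :=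
  let h := fun z => f z * (g z)^* in
  Rintegral (@lebesgue_measure R) (Tdom R) (reT h)
  +i* Rintegral (@lebesgue_measure R) (Tdom R) (imT h).

Definition op (R : realType) := fn R -> fn R.

Definition opeq (R : realType) (A B : op R) : Prop :=
  forall f, L2 f -> aeq (A f) (B f).

Definition bounded_op (R : realType) (A : op R) : Prop :=
  [/\ forall f, L2 f -> L2 (A f),
      forall f g, L2 f -> L2 g -> aeq f g -> aeq (A f) (A g),
      forall (c : R[i]) f g, L2 f -> L2 g ->
        aeq (A (fun z => c * f z + g z)) (fun z => c * A f z + A g z)
    & exists M : R, forall f, L2 f -> sqnorm (A f) <= M * sqnorm f].

Definition is_adjoint (R : realType) (A As : op R) : Prop :=
  bounded_op As /\ forall f g, L2 f -> L2 g -> ip (A f) g = ip f (As g).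

Definition idop (R : realType) : op R := fun f => f.
Arguments idop : clear implicits.
Definition zeroop (R : realType) : op R := fun _ _ => 0.
Arguments zeroop : clear implicits.
Definition compop (R : realType) (A B : op R) : op R := fun f => A (B f).

Definition mulop (R : realType) (phi : fn R) : op R := fun f z => phi z * f z.

Definition cuntz (R : realType) (N : nat) (S Ss : 'I_N -> op R) : Prop :=
  [/\ forall i, bounded_op (S i),
      forall i, is_adjoint (S i) (Ss i),
      forall i j, opeq (compop (Ss i) (S j)) (if i == j then @idop R else @zeroop R)
    & opeq (fun f z => \sum_(i < N) S i (Ss i f) z) (@idop R)].

Definition alphaS (R : realType) (N : nat) (S Ss : 'I_N -> op R) (A : op R) : op R :=
  fun f z => \sum_(i < N) S i (A (Ss i f)) z.

Definition bfac (R : realType) (w : R[i]) : R[i] -> R[i] :=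
  if w == 0 then (fun z => z)
  else (fun z => (`|w| / w) * ((w - z) / (1 - w^* * z))).

Definition blaschke (R : realType) (N : nat) (a : 'I_N -> R[i]) : R[i] -> R[i] :=
  fun z => \prod_(j < N) bfac (a j) z.

Definition intertwines (R : realType) (N : nat) (b : R[i] -> R[i])
    (S Ss : 'I_N -> op R) : Prop :=
  forall phi : fn R, Linf phi ->
    opeq (alphaS S Ss (mulop phi)) (mulop (fun z => phi (b z))).

Definition unitary_Linf (R : realType) (N : nat) (u : 'I_N -> 'I_N -> fn R) : Prop :=
  [/\ forall i j, Linf (u i j),
      forall i j, aeq (fun z => \sum_(k < N) u i k z * (u j k z)^*)
                      (fun _ => if i == j then 1 else 0)
    & forall i j, aeq (fun z => \sum_(k < N) (u k i z)^* * u k j z)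
                      (fun _ => if i == j then 1 else 0)].

Definition linked (R : realType) (N : nat) (S1 S2 : 'I_N -> op R)
    (u : 'I_N -> 'I_N -> fn R) : Prop :=
  forall j, opeq (S2 j) (fun f z => \sum_(i < N) S1 i (mulop (u i j) f) z).

Definition constant_mx (R : realType) (N : nat) (u : 'I_N -> 'I_N -> fn R) : Prop :=
  exists c : 'I_N -> 'I_N -> R[i], forall i j, aeq (u i j) (fun _ => c i j).

(* Main.v *)
Require Import Defs.
From mathcomp Require Import all_boot all_order all_algebra.
From mathcomp Require Import all_classical all_reals all_analysis.
From mathcomp Require Import complex.
From mathcomp Require Import ring lra.
Import Order.TTheory GRing.Theory Num.Theory numFieldNormedType.Exports.
Set Implicit Arguments. Unset Strict Implicit. Unset Printing Implicit Defensive.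
Local Open Scope ring_scope.
Local Open Scope complex_scope.
Local Open Scope classical_set_scope.

Section Base.
Variable R : realType.
Local Notation mu := (@lebesgue_measure R).
Local Notation D := (Tdom R).
Local Notation Re := complex.Re.
Local Notation Im := complex.Im.

Lemma ReM (x y : R[i]) : Re (x * y) = Re x * Re y - Im x * Im y.
Proof. by case: x => a b; case: y => c d. Qed.
Lemma ImM (x y : R[i]) : Im (x * y) = Re x * Im y + Im x * Re y.
Proof. by case: x => a b; case: y => c d. Qed.
Lemma ReD (x y : R[i]) : Re (x + y) = Re x + Re y.
Proof. by case: x => a b; case: y => c d. Qed.
Lemma ImD (x y : R[i]) : Im (x + y) = Im x + Im y.
Proof. by case: x => a b; case: y => c d. Qed.
Lemma ReC (x : R[i]) : Re (x^*) = Re x.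
Proof. by case: x. Qed.
Lemma ImC (x : R[i]) : Im (x^*) = - Im x.
Proof. by case: x. Qed.
Lemma ReR (r : R) : Re (r%:C) = r. Proof. by []. Qed.
Lemma ImR (r : R) : Im (r%:C) = 0. Proof. by []. Qed.

Definition nrm2 (x : R[i]) : R := Re x ^+ 2 + Im x ^+ 2.
Lemma nrm2_ge0 x : 0 <= nrm2 x.
Proof. by rewrite /nrm2 addr_ge0 // sqr_ge0. Qed.
Lemma nrm2M x y : nrm2 (x * y) = nrm2 x * nrm2 y.
Proof. rewrite /nrm2 ReM ImM; ring. Qed.
Lemma mulCC (x : R[i]) : x * x^* = (nrm2 x)%:C.
Proof. case: x => a b; rewrite /nrm2 /=; apply/eqP; rewrite eq_complex /=; apply/andP; split; apply/eqP; ring. Qed.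
Lemma nrm2_eq0 x : nrm2 x = 0 -> x = 0.
Proof.
case: x => a b; rewrite /nrm2 /= => h.
have ha : a ^+ 2 = 0 by apply/eqP; rewrite eq_le sqr_ge0 andbT -h lerDl sqr_ge0.
have hb : b ^+ 2 = 0 by move: h; rewrite ha add0r.
by move/eqP: ha; rewrite sqrf_eq0 => /eqP ->; move/eqP: hb; rewrite sqrf_eq0 => /eqP ->.
Qed.
Lemma nrm2D x y : nrm2 (x + y) <= 2 * nrm2 x + 2 * nrm2 y.
Proof.
rewrite /nrm2 ReD ImD.
have h : forall a b : R, (a + b) ^+ 2 <= 2 * a ^+ 2 + 2 * b ^+ 2.
  by move=> a b; rewrite -subr_ge0 (_ : _ - _ = (a - b) ^+ 2) ?sqr_ge0 //; ring.
have := h (Re x) (Re y); have := h (Im x) (Im y); lra.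
Qed.
Lemma nrm2Z (r : R) x : nrm2 (r%:C * x) = r ^+ 2 * nrm2 x.
Proof. by rewrite nrm2M /nrm2 /=; congr (_ * _); ring. Qed.
Lemma nrm2_conj x : nrm2 (x^*) = nrm2 x.
Proof. by rewrite /nrm2 ReC ImC sqrrN. Qed.
Lemma Re_le x : `|Re x| <= (1 + nrm2 x) / 2.
Proof.
rewrite /nrm2 ler_norml; apply/andP; split.
- have := sqr_ge0 (Re x + 1); have := sqr_ge0 (Im x); rewrite !expr2; nra.
- have := sqr_ge0 (Re x - 1); have := sqr_ge0 (Im x); rewrite !expr2; nra.
Qed.
Lemma Im_le x : `|Im x| <= (1 + nrm2 x) / 2.
Proof.
rewrite /nrm2 ler_norml; apply/andP; split.
- have := sqr_ge0 (Im x + 1); have := sqr_ge0 (Re x); rewrite !expr2; nra.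
- have := sqr_ge0 (Im x - 1); have := sqr_ge0 (Re x); rewrite !expr2; nra.
Qed.
Lemma Re_le2 x : Re x ^+ 2 <= nrm2 x.
Proof. by rewrite /nrm2 lerDl sqr_ge0. Qed.
Lemma Im_le2 x : Im x ^+ 2 <= nrm2 x.
Proof. by rewrite /nrm2 lerDr sqr_ge0. Qed.
Lemma ReM_le x y : `|Re (x * y)| <= (nrm2 x + nrm2 y) / 2.
Proof.
rewrite ReM /nrm2 ler_norml; apply/andP; split.
- have := sqr_ge0 (Re x + Re y); have := sqr_ge0 (Im x - Im y); rewrite !expr2; nra.
- have := sqr_ge0 (Re x - Re y); have := sqr_ge0 (Im x + Im y); rewrite !expr2; nra.
Qed.
Lemma ImM_le x y : `|Im (x * y)| <= (nrm2 x + nrm2 y) / 2.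
Proof.
rewrite ImM /nrm2 ler_norml; apply/andP; split.
- have := sqr_ge0 (Re x + Im y); have := sqr_ge0 (Im x + Re y); rewrite !expr2; nra.
- have := sqr_ge0 (Re x - Im y); have := sqr_ge0 (Im x - Re y); rewrite !expr2; nra.
Qed.

Lemma abs2TE (f : fn R) t : abs2T f t = nrm2 (f (circ t)). Proof. by []. Qed.

End Base.

Section Base2.
Variable R : realType.
Local Notation mu := (@lebesgue_measure R).
Local Notation D := (Tdom R).
Local Notation Re := complex.Re.
Local Notation Im := complex.Im.
Implicit Types f g h : fn R.

Lemma mD : measurable D.
Proof. exact: measurable_itv. Qed.

Lemma muD : mu D = (2 * pi)%:E.
Proof.
rewrite /Tdom lebesgue_measure_itv /= lte_fin mulr_gt0 // ?pi_gt0 //.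
by rewrite oppr0 adde0.
Qed.

Lemma aeS (P Q : R -> Prop) : (forall t, P t -> Q t) -> {ae mu, forall t, P t} -> {ae mu, forall t, Q t}.
Proof. move=> H; exact: (@filterS _ _ (ae_filter_ringOfSetsType mu)). Qed.
Lemma aeS2 (P Q S : R -> Prop) : (forall t, P t -> Q t -> S t) -> {ae mu, forall t, P t} -> {ae mu, forall t, Q t} -> {ae mu, forall t, S t}.
Proof. move=> H; exact: (@filterS2 _ _ (ae_filter_ringOfSetsType mu)). Qed.
Lemma aeq_refl f : aeq f f.
Proof. exact: aeW. Qed.
Lemma aeq_sym f g : aeq f g -> aeq g f.
Proof. by apply: aeS => t H Dt; rewrite H. Qed.
Lemma aeq_trans f g h : aeq f g -> aeq g h -> aeq f h.
Proof. by move=> H1 H2; apply: aeS2 H1 H2 => t H1 H2 Dt; rewrite H1 // H2. Qed.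
Lemma aeq_eq f g : (forall z, f z = g z) -> aeq f g.
Proof. by move=> H; apply: aeW => t _; rewrite H. Qed.
Lemma aeq_map2 (k : R[i] -> R[i] -> R[i]) f1 f2 g1 g2 :
  aeq f1 g1 -> aeq f2 g2 -> aeq (fun z => k (f1 z) (f2 z)) (fun z => k (g1 z) (g2 z)).
Proof. by move=> H1 H2; apply: aeS2 H1 H2 => t H1 H2 Dt /=; rewrite H1 // H2. Qed.
Lemma aeq_map (k : R[i] -> R[i]) f g :
  aeq f g -> aeq (fun z => k (f z)) (fun z => k (g z)).
Proof. by apply: aeS => t H Dt; rewrite H. Qed.
Lemma aeq_add f1 f2 g1 g2 : aeq f1 g1 -> aeq f2 g2 ->
  aeq (fun z => f1 z + f2 z) (fun z => g1 z + g2 z).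
Proof. exact: (aeq_map2 +%R). Qed.
Lemma aeq_mul f1 f2 g1 g2 : aeq f1 g1 -> aeq f2 g2 ->
  aeq (fun z => f1 z * f2 z) (fun z => g1 z * g2 z).
Proof. exact: (aeq_map2 *%R). Qed.
Lemma aeq_mull (c : fn R) f g : aeq f g -> aeq (fun z => c z * f z) (fun z => c z * g z).
Proof. by move=> H; apply: aeq_mul => //; exact: aeq_refl. Qed.

Lemma ae_all_seq (I : eqType) (s : seq I) (P : I -> R -> Prop) :
  (forall i, {ae mu, forall t, P i t}) -> {ae mu, forall t, forall i, i \in s -> P i t}.
Proof.
move=> H; elim: s => [|a s IH]; first by apply: aeW => t i.
apply: aeS2 (H a) IH => t Ha Hs i; rewrite inE => /orP [/eqP -> //|]; exact: Hs.
Qed.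
Lemma ae_all (I : finType) (P : I -> R -> Prop) :
  (forall i, {ae mu, forall t, P i t}) -> {ae mu, forall t, forall i, P i t}.
Proof.
move=> H; apply: aeS (ae_all_seq (enum I) H) => t Ht i; apply: Ht; exact: mem_enum.
Qed.
Lemma aeq_sum (I : finType) (F G : I -> fn R) :
  (forall i, aeq (F i) (G i)) -> aeq (fun z => \sum_i F i z) (fun z => \sum_i G i z).
Proof.
move=> H; have := ae_all H; apply: aeS => t Ht Dt.
by apply: eq_bigr => i _; rewrite Ht.
Qed.

Lemma reTE f t : reT f t = Re (f (circ t)). Proof. by []. Qed.
Lemma imTE f t : imT f t = Im (f (circ t)). Proof. by []. Qed.

Lemma meas_abs2T f : cmeas f -> measurable_fun D (abs2T f).
Proof. by case=> h1 h2; apply: measurable_realfun.measurable_funD; apply: measurable_realfun.measurable_funX. Qed.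

Lemma cmeas_add f g : cmeas f -> cmeas g -> cmeas (fun z => f z + g z).
Proof.
case=> f1 f2 [g1 g2]; split.
- have -> : reT (fun z => f z + g z) = reT f \+ reT g by apply/funext => t; rewrite /reT ReD.
  exact: measurable_realfun.measurable_funD.
- have -> : imT (fun z => f z + g z) = imT f \+ imT g by apply/funext => t; rewrite /imT ImD.
  exact: measurable_realfun.measurable_funD.
Qed.
Lemma cmeas_mul f g : cmeas f -> cmeas g -> cmeas (fun z => f z * g z).
Proof.
case=> f1 f2 [g1 g2]; split.
- have -> : reT (fun z => f z * g z) = (reT f \* reT g) \- (imT f \* imT g).
    by apply/funext => t; rewrite /reT /imT ReM.
  by apply: measurable_realfun.measurable_funB; apply: measurable_realfun.measurable_funM.
- have -> : imT (fun z => f z * g z) = (reT f \* imT g) \+ (imT f \* reT g).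
    by apply/funext => t; rewrite /reT /imT ImM.
  by apply: measurable_realfun.measurable_funD; apply: measurable_realfun.measurable_funM.
Qed.
Lemma cmeas_cst (c : R[i]) : cmeas (fun _ => c).
Proof. by split; apply: measurable_cst. Qed.
Lemma cmeas_conj f : cmeas f -> cmeas (fun z => (f z)^*).
Proof.
case=> f1 f2; split.
- have -> : reT (fun z => (f z)^*) = reT f by apply/funext => t; rewrite /reT ReC.
  exact: f1.
- have -> : imT (fun z => (f z)^*) = \- imT f by apply/funext => t; rewrite /imT ImC.
  exact: measurable_realfun.measurable_funN.
Qed.
Lemma cmeas_sum (I : finType) (F : I -> fn R) :
  (forall i, cmeas (F i)) -> cmeas (fun z => \sum_i F i z).
Proof.
move=> H.
suff : forall s : seq I, cmeas (fun z => \sum_(i <- s) F i z) by move/(_ (index_enum I)).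
elim=> [|a s IH].
  have -> : (fun z => \sum_(i <- [::]) F i z) = (fun _ => 0) by apply/funext => z; rewrite big_nil.
  exact: cmeas_cst.
have -> : (fun z => \sum_(i <- a :: s) F i z) = (fun z => F a z + \sum_(i <- s) F i z).
  by apply/funext => z; rewrite big_cons.
exact: cmeas_add.
Qed.
Lemma cmeas_scale (c : R[i]) f : cmeas f -> cmeas (fun z => c * f z).
Proof. by move=> H; apply: cmeas_mul => //; exact: cmeas_cst. Qed.

Definition hh (x : R) : R := (1 + `|x|)^-1.
Lemma hh_cont : continuous hh.
Proof.
move=> x; apply: cvgV.
  by rewrite gt_eqF // ltr_pwDl // normr_ge0.
apply: cvgD; first exact: cvg_cst.
exact: (@norm_continuous _ R x).
Qed.
Lemma hh_meas : measurable_fun setT hh.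
Proof. exact: measurable_realfun.continuous_measurable_fun hh_cont. Qed.

Definition psi f : fn R := fun z => (hh (nrm2 (f z)))%:C.
Lemma cmeas_psi f : cmeas f -> cmeas (psi f).
Proof.
move=> cf; split.
- have -> : reT (psi f) = hh \o abs2T f by [].
  apply: measurableT_comp; [exact: hh_meas | exact: meas_abs2T].
- have -> : imT (psi f) = cst 0 by [].
  exact: measurable_cst.
Qed.
Lemma hh_gt0 x : 0 < hh x.
Proof. by rewrite /hh invr_gt0 ltr_pwDl // normr_ge0. Qed.
Lemma hh_le1 x : hh x <= 1.
Proof.
have h : 0 < 1 + `|x| by rewrite ltr_pwDl // normr_ge0.
by rewrite /hh invf_le1 // lerDl normr_ge0.
Qed.
Lemma nrm2_psi f z : nrm2 (psi f z) <= 1.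
Proof.
rewrite /psi /nrm2 /= expr0n /= addr0.
have h1 := hh_gt0 (nrm2 (f z)); have h2 := hh_le1 (nrm2 (f z)).
by rewrite expr2 mulr_ile1 // ltW.
Qed.
Lemma nrm2_psi_f f z : nrm2 (psi f z * f z) <= 1.
Proof.
rewrite nrm2M /psi /hh; set x := nrm2 (f z).
have x0 : 0 <= x by apply: nrm2_ge0.
rewrite /nrm2 /= expr0n /= addr0 ger0_norm //.
set y := (1 + x)^-1.
have y0 : 0 < y by rewrite invr_gt0 ltr_pwDl.
have yx : y * (1 + x) = 1 by rewrite mulVf // gt_eqF // ltr_pwDl.
rewrite expr2; nra.
Qed.

End Base2.
Arguments mD {R}. Arguments muD {R}.

Section Base3.
Variable R : realType.
Local Notation mu := (@lebesgue_measure R).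
Local Notation D := (Tdom R).
Local Notation Re := complex.Re.
Local Notation Im := complex.Im.

Lemma mDL : @measurable _ (measurableTypeR R) D.
Proof. exact: mD. Qed.
Lemma mconv (E : set R) (h : R -> R) : measurable_fun E h -> @measurable_fun _ _ (measurableTypeR R) R E h.
Proof. exact. Qed.

Definition rint (h : R -> R) : Prop := mu.-integrable D (EFin \o h).

Lemma rint_meas (h : R -> R) : rint h -> measurable_fun D h.
Proof. by move=> /integrableP [] /measurable_realfun.measurable_EFinP. Qed.

Lemma rint_cst (k : R) : rint (fun _ => k).
Proof.
apply/integrableP; split; first exact/measurable_realfun.measurable_EFinP/measurable_cst.
have -> : (fun x => `|(EFin \o (fun _ : R => k)) x|%E) = cst (`|k|%:E) by apply/funext => t; rewrite /comp abse_EFin.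
rewrite integral_cst; last exact: mDL.
rewrite -[X in (_ * X)%E]/(lebesgue_measure D) muD; exact: ltry.
Qed.

Lemma rintD (h1 h2 : R -> R) : rint h1 -> rint h2 -> rint (fun t => h1 t + h2 t).
Proof.
move=> H1 H2; rewrite /rint; apply: (eq_integrable mDL _ _ _ (integrableD mDL H1 H2)).
by move=> t _; rewrite /= EFinD.
Qed.
Lemma rintZ (k : R) (h : R -> R) : rint h -> rint (fun t => k * h t).
Proof.
move=> H; rewrite /rint; apply: (eq_integrable mDL _ _ _ (integrableZl mDL k H)).
by move=> t _; rewrite /= EFinM.
Qed.
Lemma rintN (h : R -> R) : rint h -> rint (fun t => - h t).
Proof.
move=> H; rewrite /rint; apply: (eq_integrable mDL _ _ _ (rintZ (-1) H)) => t _ /=; by rewrite mulN1r.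
Qed.
Lemma rintB (h1 h2 : R -> R) : rint h1 -> rint h2 -> rint (fun t => h1 t - h2 t).
Proof. by move=> H1 H2; apply: rintD => //; apply: rintN. Qed.

Lemma rint_dom (h g : R -> R) : measurable_fun D h -> rint g -> (forall t, D t -> `|h t| <= g t) -> rint h.
Proof.
move=> mh Hg hg; rewrite /rint; apply: (le_integrable mDL _ _ Hg).
  exact/measurable_realfun.measurable_EFinP.
move=> t Dt; rewrite /comp ?abse_EFin lee_fin.
by apply: (le_trans (hg t Dt)); apply: ler_norm.
Qed.

Lemma rint_ext (h g : R -> R) : (forall t, D t -> h t = g t) -> rint h -> rint g.
Proof. by move=> hg H; apply: (eq_integrable mDL _ _ _ H) => t /set_mem Dt /=; rewrite hg. Qed.

Lemma L2_cmeas (f : fn R) : L2 f -> cmeas f.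
Proof. by case. Qed.

Lemma L2_rint (f : fn R) : L2 f -> rint (abs2T f).
Proof.
case=> cf fin; apply/integrableP; split.
  apply/measurable_realfun.measurable_EFinP; apply: mconv; exact: meas_abs2T.
apply: le_lt_trans fin; rewrite le_eqVlt; apply/orP; left; apply/eqP.
apply: eq_integral => t _; rewrite /comp ?abse_EFin ger0_norm //; exact: nrm2_ge0.
Qed.

Lemma L2_dom (g : fn R) (F : R -> R) : cmeas g -> rint F ->
  {ae mu, forall t, D t -> abs2T g t <= F t} -> L2 g.
Proof.
move=> cg HF bd; split => //.
have /integrableP [mF fin] := HF.
have mF' : measurable_fun D F by apply/measurable_realfun.measurable_EFinP.
have fin' : (\int[mu]_(t in D) (`|F t|)%:E < +oo)%E.
  apply: le_lt_trans fin; rewrite le_eqVlt; apply/orP; left; apply/eqP.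
  by apply: eq_integral => t _; rewrite /comp ?abse_EFin.
apply: le_lt_trans fin'.
apply: (ae_ge0_le_integral mDL).
- by move=> t _; rewrite lee_fin; exact: nrm2_ge0.
- apply/measurable_realfun.measurable_EFinP; apply: mconv; exact: meas_abs2T.
- by move=> t _; rewrite lee_fin normr_ge0.
- apply/measurable_realfun.measurable_EFinP; exact: (measurableT_comp _ mF').
- apply: aeS bd => t H Dt; rewrite lee_fin.
  by apply: (le_trans (H Dt)); apply: ler_norm.
Qed.

Lemma L2_add (f g : fn R) : L2 f -> L2 g -> L2 (fun z => f z + g z).
Proof.
move=> Hf Hg; apply: (@L2_dom _ (fun t => 2 * abs2T f t + 2 * abs2T g t)).
- by apply: cmeas_add; apply: L2_cmeas.
- by apply: rintD; apply: rintZ; apply: L2_rint.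
- by apply: aeW => t Dt; rewrite /abs2T -/(nrm2 _) /=; exact: nrm2D.
Qed.

Lemma L2_mulb (phi : fn R) (M : R) (f : fn R) : cmeas phi ->
  {ae mu, forall t, D t -> abs2T phi t <= M} -> L2 f -> L2 (fun z => phi z * f z).
Proof.
move=> cphi bd Hf; apply: (@L2_dom _ (fun t => M * abs2T f t)).
- by apply: cmeas_mul => //; apply: L2_cmeas.
- by apply: rintZ; apply: L2_rint.
- apply: aeS bd => t H Dt; rewrite /abs2T -!/(nrm2 _) nrm2M.
  by apply: ler_wpM2r; [exact: nrm2_ge0 | exact: H].
Qed.

Lemma L2_Linf (phi f : fn R) : Linf phi -> L2 f -> L2 (fun z => phi z * f z).
Proof. by case=> cphi [M bd]; apply: L2_mulb bd. Qed.

Lemma L2_scale (c : R[i]) (f : fn R) : L2 f -> L2 (fun z => c * f z).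
Proof.
apply: (@L2_mulb (fun _ => c) (nrm2 c)); first exact: cmeas_cst.
by apply: aeW => t _.
Qed.

Lemma L2_cst (c : R[i]) : L2 (fun _ => c).
Proof.
apply: (@L2_dom _ (fun _ => nrm2 c)); first exact: cmeas_cst.
- exact: rint_cst.
- by apply: aeW => t _.
Qed.

Lemma L2_aeq (f g : fn R) : L2 f -> cmeas g -> aeq f g -> L2 g.
Proof.
move=> Hf cg H; apply: (@L2_dom _ (abs2T f)) => //; first exact: L2_rint.
by apply: aeS H => t H Dt; rewrite /abs2T -!/(nrm2 _) H.
Qed.

Lemma L2_sum (I : finType) (F : I -> fn R) :
  (forall i, L2 (F i)) -> L2 (fun z => \sum_i F i z).
Proof.
move=> H.
suff : forall s : seq I, L2 (fun z => \sum_(i <- s) F i z) by move/(_ (index_enum I)).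
elim=> [|a s IH].
  have -> : (fun z => \sum_(i <- [::]) F i z) = (fun _ => 0) by apply/funext => z; rewrite big_nil.
  exact: L2_cst.
have -> : (fun z => \sum_(i <- a :: s) F i z) = (fun z => F a z + \sum_(i <- s) F i z).
  by apply/funext => z; rewrite big_cons.
exact: L2_add.
Qed.

Lemma Linf_psi (f : fn R) : cmeas f -> Linf (psi f).
Proof.
move=> cf; split; first exact: cmeas_psi.
by exists 1; apply: aeW => t _; exact: nrm2_psi.
Qed.
Lemma Linf_psi_f (f : fn R) : cmeas f -> Linf (fun z => psi f z * f z).
Proof.
move=> cf; split; first by apply: cmeas_mul => //; exact: cmeas_psi.
by exists 1; apply: aeW => t _; exact: nrm2_psi_f.
Qed.
Lemma Linf_cst (c : R[i]) : Linf (fun _ => c).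
Proof. by split; [exact: cmeas_cst | exists (nrm2 c); apply: aeW]. Qed.

Lemma rint_Re (f : fn R) : L2 f -> rint (reT f).
Proof.
move=> Hf; apply: (@rint_dom _ (fun t => (1 + abs2T f t) / 2)).
- by case: (L2_cmeas Hf).
- under [X in rint X]funext do rewrite mulrC.
  by apply: rintZ; apply: rintD; [exact: rint_cst | exact: L2_rint].
- by move=> t _; exact: Re_le.
Qed.
Lemma rint_Im (f : fn R) : L2 f -> rint (imT f).
Proof.
move=> Hf; apply: (@rint_dom _ (fun t => (1 + abs2T f t) / 2)).
- by case: (L2_cmeas Hf).
- under [X in rint X]funext do rewrite mulrC.
  by apply: rintZ; apply: rintD; [exact: rint_cst | exact: L2_rint].
- by move=> t _; exact: Im_le.
Qed.
Lemma rint_ReM (f g : fn R) : L2 f -> L2 g -> rint (reT (fun z => f z * g z)).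
Proof.
move=> Hf Hg; apply: (@rint_dom _ (fun t => (abs2T f t + abs2T g t) / 2)).
- by case: (cmeas_mul (L2_cmeas Hf) (L2_cmeas Hg)).
- under [X in rint X]funext do rewrite mulrC.
  by apply: rintZ; apply: rintD; exact: L2_rint.
- by move=> t _; exact: ReM_le.
Qed.
Lemma rint_ImM (f g : fn R) : L2 f -> L2 g -> rint (imT (fun z => f z * g z)).
Proof.
move=> Hf Hg; apply: (@rint_dom _ (fun t => (abs2T f t + abs2T g t) / 2)).
- by case: (cmeas_mul (L2_cmeas Hf) (L2_cmeas Hg)).
- under [X in rint X]funext do rewrite mulrC.
  by apply: rintZ; apply: rintD; exact: L2_rint.
- by move=> t _; exact: ImM_le.
Qed.

Lemma L2_conj (f : fn R) : L2 f -> L2 (fun z => (f z)^*).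
Proof.
move=> Hf; apply: (@L2_dom _ (abs2T f)); first exact/cmeas_conj/L2_cmeas.
- exact: L2_rint.
- by apply: aeW => t _; rewrite /abs2T -!/(nrm2 _) nrm2_conj.
Qed.

End Base3.
Arguments mDL {R}.

Section Ops.
Variable R : realType.
Local Notation mu := (@lebesgue_measure R).
Local Notation D := (Tdom R).

Section BO.
Variable A : op R.
Hypothesis HA : bounded_op A.

Lemma bo_L2 f : L2 f -> L2 (A f).
Proof. by case: HA => H _ _ _; exact: H. Qed.
Lemma bo_aeq f g : L2 f -> L2 g -> aeq f g -> aeq (A f) (A g).
Proof. by case: HA => _ H _ _; exact: H. Qed.
Lemma bo_lin (c : R[i]) f g : L2 f -> L2 g ->
  aeq (A (fun z => c * f z + g z)) (fun z => c * A f z + A g z).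
Proof. by case: HA => _ _ H _; exact: H. Qed.
Lemma bo_ext f g : L2 f -> (forall z, f z = g z) -> aeq (A f) (A g).
Proof.
move=> Hf e; have -> : g = f by apply/funext => z; rewrite e.
exact: aeq_refl.
Qed.
Lemma bo_0 : aeq (A (fun _ => 0)) (fun _ => 0).
Proof.
have L0 : L2 (fun _ : R[i] => 0 : R[i]) by exact: L2_cst.
have H := bo_lin 1 L0 L0.
have H2 := bo_ext L0 (g := fun z : R[i] => 1 * 0 + 0) (fun z => esym (etrans (addr0 _) (mul1r _))).
have := aeq_trans H2 H.
apply: aeS => t H3 Dt; have := H3 Dt; rewrite mul1r /= => e.
by apply: (addrI (A (fun _ => 0) (circ t))); rewrite addr0 -e.
Qed.
Lemma bo_0' f : L2 f -> aeq f (fun _ => 0) -> aeq (A f) (fun _ => 0).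
Proof.
move=> Hf H; apply: aeq_trans bo_0; apply: bo_aeq => //; exact: L2_cst.
Qed.
Lemma bo_add f g : L2 f -> L2 g -> aeq (A (fun z => f z + g z)) (fun z => A f z + A g z).
Proof.
move=> Hf Hg; have H := bo_lin 1 Hf Hg.
apply: aeq_trans (aeq_trans (bo_ext _ (g := fun z => 1 * f z + g z) _) H) _.
- exact: L2_add.
- by move=> z; rewrite mul1r.
- by apply: aeq_eq => z; rewrite mul1r.
Qed.
Lemma bo_scale (c : R[i]) f : L2 f -> aeq (A (fun z => c * f z)) (fun z => c * A f z).
Proof.
move=> Hf; have L0 : L2 (fun _ : R[i] => 0 : R[i]) by exact: L2_cst.
have H := bo_lin c Hf L0.
apply: aeq_trans (aeq_trans (bo_ext _ (g := fun z => c * f z + 0) _) H) _.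
- exact: L2_scale.
- by move=> z; rewrite addr0.
- have := bo_0; apply: aeS => t H0 Dt; by rewrite H0 // addr0.
Qed.
Lemma bo_sum (I : finType) (F : I -> fn R) : (forall i, L2 (F i)) ->
  aeq (A (fun z => \sum_i F i z)) (fun z => \sum_i A (F i) z).
Proof.
move=> H.
suff : forall s : seq I, aeq (A (fun z => \sum_(i <- s) F i z)) (fun z => \sum_(i <- s) A (F i) z).
  by move/(_ (index_enum I)).
have Ls : forall s : seq I, L2 (fun z => \sum_(i <- s) F i z).
  elim=> [|a s IH].
    have -> : (fun z => \sum_(i <- [::]) F i z) = (fun _ => 0) by apply/funext => z; rewrite big_nil.
    exact: L2_cst.
  have -> : (fun z => \sum_(i <- a :: s) F i z) = (fun z => F a z + \sum_(i <- s) F i z).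
    by apply/funext => z; rewrite big_cons.
  exact: L2_add.
elim=> [|a s IH].
  have -> : (fun z => \sum_(i <- [::]) F i z) = (fun _ => 0) by apply/funext => z; rewrite big_nil.
  apply: aeq_trans bo_0 _; apply: aeq_eq => z; by rewrite big_nil.
have -> : (fun z => \sum_(i <- a :: s) F i z) = (fun z => F a z + \sum_(i <- s) F i z).
  by apply/funext => z; rewrite big_cons.
apply: aeq_trans (bo_add (H a) (Ls s)) _.
have := IH; apply: aeS => t H1 Dt; by rewrite big_cons H1.
Qed.
Lemma bo_sum_scale (I : finType) (c : I -> R[i]) (F : I -> fn R) : (forall i, L2 (F i)) ->
  aeq (A (fun z => \sum_i c i * F i z)) (fun z => \sum_i c i * A (F i) z).
Proof.
move=> H; apply: aeq_trans (bo_sum (F := fun i z => c i * F i z) _) _.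
  by move=> i; apply: L2_scale.
apply: aeq_sum => i; exact: bo_scale.
Qed.
End BO.

Lemma aeq_sum_delta (I : finType) (k : I) (F : I -> fn R) (G : fn R) :
  (forall i, aeq (F i) (fun z => if i == k then G z else 0)) ->
  aeq (fun z => \sum_i F i z) G.
Proof.
move=> H; apply: aeq_trans (aeq_sum H) _; apply: aeq_eq => z.
by rewrite -big_mkcond /= big_pred1_eq.
Qed.

Section Cuntz.
Variable N : nat.
Variables S Ss : 'I_N -> op R.
Hypothesis HS : cuntz S Ss.

Lemma cu_S i : bounded_op (S i).
Proof. by case: HS => H _ _ _; exact: H. Qed.
Lemma cu_Ss i : bounded_op (Ss i).
Proof. by case: HS => _ H _ _; case: (H i). Qed.
Lemma cu_adj i f g : L2 f -> L2 g -> ip (S i f) g = ip f (Ss i g).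
Proof. by case: HS => _ H _ _; case: (H i) => _ H2; exact: H2. Qed.
Lemma cu_rel i j f : L2 f -> aeq (Ss i (S j f)) (fun z => if i == j then f z else 0).
Proof.
case: HS => _ _ H _ Hf; have := H i j f Hf; rewrite /compop.
by case: (i == j).
Qed.
Lemma cu_sum f : L2 f -> aeq (fun z => \sum_i S i (Ss i f) z) f.
Proof. by case: HS => _ _ _ H; exact: H. Qed.
Lemma cu_pick k (X : 'I_N -> fn R) : (forall i, L2 (X i)) ->
  aeq (Ss k (fun z => \sum_i S i (X i) z)) (X k).
Proof.
move=> HX; apply: aeq_trans (bo_sum (cu_Ss k) (fun i => bo_L2 (cu_S i) (HX i))) _.
apply: (@aeq_sum_delta _ k (fun i => Ss k (S i (X i)))) => i; apply: aeq_trans (cu_rel k i (HX i)) _.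
apply: aeq_eq => z; by case: eqVneq => [->|ne].
Qed.
Lemma L2_alpha (A : op R) f : (forall g, L2 g -> L2 (A g)) -> L2 f -> L2 (alphaS S Ss A f).
Proof.
move=> HA Hf; apply: L2_sum => i; apply: (bo_L2 (cu_S i)); apply: HA.
exact: (bo_L2 (cu_Ss i)).
Qed.
End Cuntz.

End Ops.

Section Part1.
Variable R : realType.
Local Notation mu := (@lebesgue_measure R).
Local Notation D := (Tdom R).

Definition one : fn R := fun _ => 1.
Lemma L2_one : L2 one. Proof. exact: L2_cst. Qed.

Section Inter.
Variable N : nat.
Variable b : R[i] -> R[i].
Variables S Ss : 'I_N -> op R.
Hypothesis HS : cuntz S Ss.
Hypothesis HI : intertwines b S Ss.

Lemma step1 j (psi0 f : fn R) : Linf psi0 -> L2 f ->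
  aeq (S j (fun z => psi0 z * f z)) (fun z => psi0 (b z) * S j f z).
Proof.
move=> Hp Hf.
have Hf' := bo_L2 (cu_S HS j) Hf.
have H := HI Hp Hf'.
apply: aeq_trans _ H; apply: aeq_sym; rewrite /alphaS /mulop.
apply: (@aeq_sum_delta _ _ j (fun k => S k (fun z => psi0 z * Ss k (S j f) z))) => k.
have L1 : L2 (fun z => psi0 z * Ss k (S j f) z) := L2_Linf Hp (bo_L2 (cu_Ss HS k) Hf').
have E : aeq (fun z => psi0 z * Ss k (S j f) z) (fun z => psi0 z * (if k == j then f z else 0)).
  exact: aeq_mull (cu_rel HS k j Hf).
case: eqVneq => [->|ne] in E L1 *.
- have E2 : aeq (fun z => psi0 z * Ss j (S j f) z) (fun z => psi0 z * f z).
    by apply: aeq_trans E _; apply: aeq_eq => z; rewrite ?eqxx.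
  exact: (bo_aeq (cu_S HS j) L1 (L2_Linf Hp Hf) E2).
- have E2 : aeq (fun z => psi0 z * Ss k (S j f) z) (fun _ => 0).
    by apply: aeq_trans E _; apply: aeq_eq => z; rewrite ?(negPf ne) mulr0.
  exact: (bo_0' (cu_S HS k) L1 E2).
Qed.

Lemma step2 i (psi0 y Z : fn R) : Linf psi0 -> L2 y -> L2 Z ->
  aeq Z (fun z => psi0 (b z) * y z) -> aeq (Ss i Z) (fun z => psi0 z * Ss i y z).
Proof.
move=> Hp Hy HZ EZ.
have H := HI Hp Hy.
have HW : L2 (alphaS S Ss (mulop psi0) y).
  by apply: (L2_alpha HS) => // g Hg; apply: L2_Linf.
apply: aeq_trans (bo_aeq (cu_Ss HS i) HZ HW (aeq_trans EZ (aeq_sym H))) _.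
exact: (@cu_pick _ _ S Ss HS i (fun k => mulop psi0 (Ss k y)) (fun k => L2_Linf Hp (bo_L2 (cu_Ss HS k) Hy))).
Qed.
End Inter.

Lemma commutant (T : op R) :
  (forall f, L2 f -> L2 (T f)) ->
  (forall psi0 f, Linf psi0 -> L2 f -> aeq (T (fun z => psi0 z * f z)) (fun z => psi0 z * T f z)) ->
  forall f, L2 f -> aeq (T f) (fun z => T one z * f z).
Proof.
move=> HT1 HTc f Hf.
have cf := L2_cmeas Hf.
have h1 := HTc _ _ (Linf_psi cf) Hf.
have h2 := HTc _ _ (Linf_psi_f cf) L2_one.
have e : (fun z => psi f z * f z * one z) = (fun z => psi f z * f z).
  by apply/funext => z; rewrite /one mulr1.
rewrite e in h2.
have := aeq_trans (aeq_sym h1) h2.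
apply: aeS => t H Dt; have := H Dt => /= {}H.
have nz : psi f (circ t) != 0.
  by rewrite /psi eq_complex /= negb_and gt_eqF // hh_gt0.
apply: (mulfI nz); rewrite H; ring.
Qed.

Section TwoCuntz.
Variable N : nat.
Variable b : R[i] -> R[i].
Variables S1 S1s S2 S2s : 'I_N -> op R.
Hypothesis H1 : cuntz S1 S1s.
Hypothesis H2 : cuntz S2 S2s.
Hypothesis I1 : intertwines b S1 S1s.
Hypothesis I2 : intertwines b S2 S2s.

Definition gm i j : fn R := S1s i (S2 j one).

Lemma T_comm i j psi0 f : Linf psi0 -> L2 f ->
  aeq (S1s i (S2 j (fun z => psi0 z * f z))) (fun z => psi0 z * S1s i (S2 j f) z).
Proof.
move=> Hp Hf.
apply: (step2 H1 I1 i Hp (bo_L2 (cu_S H2 j) Hf)).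
- exact: (bo_L2 (cu_S H2 j) (L2_Linf Hp Hf)).
- exact: (step1 H2 I2 j Hp Hf).
Qed.

Lemma T_mul i j f : L2 f -> aeq (S1s i (S2 j f)) (fun z => gm i j z * f z).
Proof.
apply: (commutant (T := fun f => S1s i (S2 j f))).
- by move=> g Hg; apply: (bo_L2 (cu_Ss H1 i)); apply: (bo_L2 (cu_S H2 j)).
- by move=> psi0 g Hp Hg; apply: T_comm.
Qed.

Lemma L2_gm i j : L2 (gm i j).
Proof. by apply: (bo_L2 (cu_Ss H1 i)); apply: (bo_L2 (cu_S H2 j)); exact: L2_one. Qed.

Lemma L2_gmf i j f : L2 f -> L2 (fun z => gm i j z * f z).
Proof.
move=> Hf; apply: (L2_aeq _ _ (T_mul i j Hf)).
- by apply: (bo_L2 (cu_Ss H1 i)); apply: (bo_L2 (cu_S H2 j)).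
- by apply: cmeas_mul; apply: L2_cmeas => //; exact: L2_gm.
Qed.

Lemma linked_gm : linked S1 S2 gm.
Proof.
move=> j f Hf.
have Hf' := bo_L2 (cu_S H2 j) Hf.
apply: aeq_trans (aeq_sym (cu_sum H1 Hf')) _.
apply: aeq_sum => i; apply: (bo_aeq (cu_S H1 i)).
- exact: (bo_L2 (cu_Ss H1 i) Hf').
- exact: L2_gmf.
- exact: T_mul.
Qed.

Lemma S1s_expand i y : L2 y -> aeq (S1s i y) (fun z => \sum_j gm i j z * S2s j y z).
Proof.
move=> Hy.
have HX : forall j, L2 (S2 j (S2s j y)).
  by move=> j; apply: (bo_L2 (cu_S H2 j)); apply: (bo_L2 (cu_Ss H2 j)).
apply: aeq_trans (bo_aeq (cu_Ss H1 i) Hy (L2_sum HX) (aeq_sym (cu_sum H2 Hy))) _.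
apply: aeq_trans (bo_sum (cu_Ss H1 i) HX) _.
apply: aeq_sum => j; apply: T_mul; exact: (bo_L2 (cu_Ss H2 j)).
Qed.

End TwoCuntz.

End Part1.
Arguments L2_one {R}.
Arguments one {R}.

Section IP.
Variable R : realType.
Local Notation mu := (@lebesgue_measure R).
Local Notation D := (Tdom R).
Local Notation Re := complex.Re.
Local Notation Im := complex.Im.

Lemma Rint_aeq (h1 h2 : R -> R) : measurable_fun D h1 -> measurable_fun D h2 ->
  {ae mu, forall t, D t -> h1 t = h2 t} -> Rintegral mu D h1 = Rintegral mu D h2.
Proof.
move=> m1 m2 H; rewrite /Rintegral; congr fine.
apply: ae_eq_integral.
- exact: mDL.
- by apply/measurable_realfun.measurable_EFinP; apply: mconv.
- by apply/measurable_realfun.measurable_EFinP; apply: mconv.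
- by apply: aeS H => t H Dt /=; rewrite H.
Qed.

Lemma RintN (h : R -> R) : rint h -> Rintegral mu D (fun t => - h t) = - Rintegral mu D h.
Proof.
move=> Hh; rewrite -mulN1r -RintegralZl //; last exact: mDL.
by apply: eq_Rintegral => t _; rewrite mulN1r.
Qed.

Lemma ip_aeq (f f' g g' : fn R) : cmeas f -> cmeas f' -> cmeas g -> cmeas g' ->
  aeq f f' -> aeq g g' -> ip f g = ip f' g'.
Proof.
move=> cf cf' cg cg' Ef Eg.
have c1 := cmeas_mul cf (cmeas_conj cg).
have c2 := cmeas_mul cf' (cmeas_conj cg').
have E : aeq (fun z => f z * (g z)^*) (fun z => f' z * (g' z)^*).
  by apply: aeq_mul => //; apply: aeq_map.
rewrite /ip; congr (_ +i* _); apply: Rint_aeq.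
- by case: c1.
- by case: c2.
- by apply: aeS E => t H Dt; rewrite /reT H.
- by case: c1.
- by case: c2.
- by apply: aeS E => t H Dt; rewrite /imT H.
Qed.

Lemma ip_conj (f g : fn R) : L2 f -> L2 g -> ip g f = (ip f g)^*.
Proof.
move=> Hf Hg; rewrite /ip.
have e1 : Rintegral mu D (reT (fun z => g z * (f z)^*)) = Rintegral mu D (reT (fun z => f z * (g z)^*)).
  apply: eq_Rintegral => t _; rewrite /reT.
  by case: (f (circ t)) => a b; case: (g (circ t)) => c d /=; ring.
have e2 : Rintegral mu D (imT (fun z => g z * (f z)^*)) = - Rintegral mu D (imT (fun z => f z * (g z)^*)).
  rewrite -RintN; last exact: (rint_ImM Hf (L2_conj Hg)).
  apply: eq_Rintegral => t _; rewrite /imT.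
  by case: (f (circ t)) => a b; case: (g (circ t)) => c d /=; ring.
by rewrite e1 e2.
Qed.

Lemma adj_ss N (S Ss : 'I_N -> op R) (HS : cuntz S Ss) i (w x : fn R) : L2 w -> L2 x ->
  ip (Ss i w) x = ip w (S i x).
Proof.
move=> Hw Hx.
rewrite (ip_conj Hx (bo_L2 (cu_Ss HS i) Hw)) -(cu_adj HS i Hx Hw).
by rewrite -(ip_conj (bo_L2 (cu_S HS i) Hx) Hw).
Qed.

Lemma Rint0_ae (phi : R -> R) : rint phi -> (forall t, D t -> 0 <= phi t) ->
  Rintegral mu D phi = 0 -> {ae mu, forall t, D t -> phi t = 0}.
Proof.
move=> Hp p0 H0.
have fin := integrable_fin_num mDL Hp.
have I0 : (\int[mu]_(x in D) (EFin \o phi) x = 0)%E.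
  by rewrite -(fineK fin); rewrite /Rintegral in H0; rewrite H0.
have /integrableP [mE _] := Hp.
have : (\int[mu]_(x in D) `|(EFin \o phi) x| = 0)%E.
  rewrite -I0; apply: eq_integral => t /set_mem Dt; rewrite /comp ?abse_EFin ger0_norm //.
  exact: p0.
move/(ae_eq_integral_abs mu mDL mE).
by apply: aeS => t H Dt; have := H Dt => /= [[]].
Qed.

Lemma L2_Linf1 (phi : fn R) : Linf phi -> L2 phi.
Proof.
move=> H; have := L2_Linf H L2_one.
by have -> : (fun z => phi z * one z) = phi by apply/funext => z; rewrite /one mulr1.
Qed.

Lemma key_alg (a c : R[i]) (p : R) :
  Re (a * (p%:C * (a - c^*))^*) - Re (1 * (c * (p%:C * (a - c^*)))^*) = p * nrm2 (a - c^*).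
Proof. by case: a => a1 a2; case: c => c1 c2; rewrite /nrm2 /=; ring. Qed.

Lemma ortho_conj (gg hh' : fn R) : L2 gg -> L2 hh' ->
  let dd := fun z => gg z - (hh' z)^* in
  let x := fun z => psi dd z * dd z in
  ip gg x = ip one (fun z => hh' z * x z) -> aeq gg (fun z => (hh' z)^*).
Proof.
move=> Hg Hh dd x H.
have Ld : L2 dd.
  have -> : dd = (fun z => gg z + (-1) * (hh' z)^*) by apply/funext => z; rewrite /dd mulN1r.
  by apply: L2_add => //; apply: L2_scale; apply: L2_conj.
have cd := L2_cmeas Ld.
have Lx : L2 x := L2_Linf1 (Linf_psi_f cd).
have Lhx : L2 (fun z => hh' z * x z).
  have := L2_Linf (Linf_psi_f cd) Hh.
  by have -> : (fun z => psi dd z * dd z * hh' z) = (fun z => hh' z * x z) by apply/funext => z; rewrite mulrC.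
have Hre := congr1 (@complex.Re R) H; rewrite /ip /= in Hre.
set phi := fun t => hh (nrm2 (dd (circ t))) * nrm2 (dd (circ t)).
have r1 := rint_ReM Hg (L2_conj Lx).
have r2 := rint_ReM L2_one (L2_conj Lhx).
have ephi : forall t, reT (fun z => gg z * (x z)^*) t - reT (fun z => one z * (hh' z * x z)^*) t = phi t.
  by move=> t; rewrite /reT /x /psi /dd /one /phi; exact: key_alg.
have I0 : Rintegral mu D phi = 0.
  have -> : Rintegral mu D phi = Rintegral mu D (fun t => reT (fun z => gg z * (x z)^*) t - reT (fun z => one z * (hh' z * x z)^*) t).
    by apply: eq_Rintegral => t _; rewrite ephi.
  by rewrite (RintegralB mDL r1 r2) Hre subrr.
have Hphi : rint phi by apply: (rint_ext (fun t _ => ephi t)); apply: rintB.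
have p0 : forall t, D t -> 0 <= phi t.
  by move=> t _; rewrite /phi mulr_ge0 // ?nrm2_ge0 // ltW // hh_gt0.
have := Rint0_ae Hphi p0 I0.
apply: aeS => t Ht Dt; have := Ht Dt; rewrite /phi => /eqP.
rewrite mulf_eq0 gt_eqF ?hh_gt0 //= => /eqP /nrm2_eq0 /eqP.
by rewrite /dd subr_eq0 => /eqP.
Qed.

End IP.

Section Part1b.
Variable R : realType.
Local Notation mu := (@lebesgue_measure R).
Local Notation D := (Tdom R).
Local Notation Re := complex.Re.

Lemma Re_sum (I : finType) (F : I -> R[i]) : Re (\sum_i F i) = \sum_i Re (F i).
Proof. by elim/big_rec2: _ => // k x y _ <-; rewrite ReD. Qed.

Variable N : nat.
Variable b : R[i] -> R[i].
Variables S1 S1s S2 S2s : 'I_N -> op R.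
Hypothesis H1 : cuntz S1 S1s.
Hypothesis H2 : cuntz S2 S2s.
Hypothesis I1 : intertwines b S1 S1s.
Hypothesis I2 : intertwines b S2 S2s.

Local Notation g := (gm S1s S2).
Local Notation h := (gm S2s S1).

Lemma GH i l : aeq (fun z => \sum_j g i j z * h j l z) (fun _ => if i == l then 1 else 0).
Proof.
have Ly : L2 (S1 l one) := bo_L2 (cu_S H1 l) L2_one.
apply: aeq_trans (aeq_sym (S1s_expand H1 H2 I1 I2 i Ly)) _.
apply: aeq_trans (cu_rel H1 i l L2_one) _.
by apply: aeq_eq => z; case: (i == l).
Qed.

Lemma HC i j : aeq (g i j) (fun z => (h j i z)^*).
Proof.
have Lg : L2 (g i j) := L2_gm H1 H2 i j.
have Lh : L2 (h j i) := L2_gm H2 H1 j i.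
move: (ortho_conj Lg Lh) => /=; apply.
set dd := fun z => _ - _.
have Ld : L2 dd.
  have -> : dd = (fun z => g i j z + (-1) * (h j i z)^*) by apply/funext => z; rewrite /dd mulN1r.
  by apply: L2_add => //; apply: L2_scale; apply: L2_conj.
have cd := L2_cmeas Ld.
have Lx : L2 (fun z => psi dd z * dd z) := L2_Linf1 (Linf_psi_f cd).
rewrite /gm (adj_ss H1 i (bo_L2 (cu_S H2 j) L2_one) Lx).
rewrite (cu_adj H2 j L2_one (bo_L2 (cu_S H1 i) Lx)).
have Lhx : L2 (fun z => h j i z * (psi dd z * dd z)).
  have := L2_Linf (Linf_psi_f cd) Lh.
  by have -> : (fun z => psi dd z * dd z * h j i z) = (fun z => h j i z * (psi dd z * dd z)) by apply/funext => z; rewrite mulrC.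
apply: ip_aeq.
- exact: (L2_cmeas L2_one).
- exact: (L2_cmeas L2_one).
- exact: (L2_cmeas (bo_L2 (cu_Ss H2 j) (bo_L2 (cu_S H1 i) Lx))).
- exact: (L2_cmeas Lhx).
- exact: aeq_refl.
- exact: (T_mul H2 H1 I2 I1 j i Lx).
Qed.

Lemma rows i j : aeq (fun z => \sum_k g i k z * (g j k z)^*) (fun _ => if i == j then 1 else 0).
Proof.
apply: aeq_trans _ (GH i j); apply: aeq_sum => k; apply: aeq_mull.
have := HC j k; apply: aeS => t H Dt; rewrite H //; exact: conjcK.
Qed.

Lemma Linf_g i j : Linf (g i j).
Proof.
split; first exact: (L2_cmeas (L2_gm H1 H2 i j)).
exists 1; have := rows i i; apply: aeS => t H Dt; have := H Dt; rewrite eqxx => /= H'.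
have e : \sum_k nrm2 (g i k (circ t)) = 1.
  have := congr1 (@complex.Re R) H'; rewrite Re_sum /= => <-.
  by apply: eq_bigr => k _; rewrite mulCC.
rewrite abs2TE -e (bigD1 j) //= lerDl; apply: sumr_ge0 => k _; exact: nrm2_ge0.
Qed.

Lemma cols i j : aeq (fun z => \sum_k (g k i z)^* * g k j z) (fun _ => if i == j then 1 else 0).
Proof.
have := ae_all (fun i => ae_all (fun j => rows i j)).
apply: aeS => t H Dt.
pose M := \matrix_(i0 < N, k < N) g i0 k (circ t).
pose Mc := \matrix_(k < N, j0 < N) (g j0 k (circ t))^*.
have e : M *m Mc = 1%:M.
  apply/matrixP => i0 j0; rewrite !mxE.
  have := H i0 j0 Dt => /= e'.
  rewrite (eq_bigr (fun k => g i0 k (circ t) * (g j0 k (circ t))^*)); last by move=> k _; rewrite !mxE.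
  by rewrite e'; case: (i0 == j0).
have e2 := mulmx1C e.
have := congr1 (fun A : 'M[R[i]]_N => A i j) e2; rewrite /= !mxE => e3.
transitivity (\sum_k Mc i k * M k j); first by apply: eq_bigr => k _; rewrite !mxE.
by rewrite e3; case: (i == j).
Qed.

Lemma part1_main : exists u : 'I_N -> 'I_N -> fn R, unitary_Linf u /\ linked S1 S2 u.
Proof.
exists g; split; last exact: (linked_gm H1 H2 I1 I2).
split.
- exact: Linf_g.
- exact: rows.
- exact: cols.
Qed.

End Part1b.

Section PP.
Variable R : realType.
Local Notation mu := (@lebesgue_measure R).
Local Notation D := (Tdom R).
Local Notation Re := complex.Re.
Local Notation Im := complex.Im.

Lemma Rint_cst (k : R) : Rintegral mu D (fun _ => k) = k * (2 * pi).
Proof.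
rewrite Rintegral_cst; last exact: mDL.
by rewrite -[X in fine X]/(lebesgue_measure D) muD.
Qed.

Lemma RintD' (h1 h2 : R -> R) : rint h1 -> rint h2 ->
  Rintegral mu D (fun t => h1 t + h2 t) = Rintegral mu D h1 + Rintegral mu D h2.
Proof. by move=> r1 r2; apply: RintegralD => //; exact: mDL. Qed.
Lemma RintZ' (k : R) (h : R -> R) : rint h ->
  Rintegral mu D (fun t => k * h t) = k * Rintegral mu D h.
Proof. by move=> r; apply: RintegralZl => //; exact: mDL. Qed.

Lemma ip1E (f : fn R) : ip f one = Rintegral mu D (reT f) +i* Rintegral mu D (imT f).
Proof.
rewrite /ip; congr (_ +i* _); apply: eq_Rintegral => t _;
  by rewrite /reT /imT /one ?ReM ?ImM /=; ring.
Qed.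

Lemma ip_one_one : ip (@one R) one = (2 * pi)%:C.
Proof.
rewrite ip1E /reT /imT /one /=.
by rewrite Rint_cst mul1r Rint_cst mul0r.
Qed.

Lemma ip_zero_one : ip (fun _ => 0 : R[i]) one = 0.
Proof.
rewrite ip1E /reT /imT /=.
by rewrite Rint_cst mul0r.
Qed.

Lemma CS (h : R -> R) : rint h -> rint (fun t => h t ^+ 2) ->
  (Rintegral mu D h) ^+ 2 <= 2 * pi * Rintegral mu D (fun t => h t ^+ 2).
Proof.
move=> r1 r2.
set I := Rintegral mu D h; set J := Rintegral mu D (fun t => h t ^+ 2); set L := 2 * pi.
have L0 : 0 < L by rewrite /L mulr_gt0 // pi_gt0.
set m := I / L.
have mL : m * L = I by rewrite /m mulfVK // gt_eqF.
have H0 : 0 <= Rintegral mu D (fun t => (h t - m) ^+ 2).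
  by apply: Rintegral_ge0 => t _; exact: sqr_ge0.
have E : Rintegral mu D (fun t => (h t - m) ^+ 2) = J - 2 * m * I + m ^+ 2 * L.
  have -> : (fun t => (h t - m) ^+ 2) = (fun t => (h t ^+ 2 + (- 2 * m) * h t) + m ^+ 2).
    by apply/funext => t; ring.
  rewrite RintD' ?Rint_cst; last exact: rint_cst.
    rewrite RintD' ?RintZ' //; last exact: rintZ.
    rewrite /I /J /L; ring.
  by apply: rintD => //; exact: rintZ.
rewrite E in H0.
have : I ^+ 2 = L * (m ^+ 2 * L) by rewrite -mL; ring.
move=> ->; rewrite ler_pM2l //.
have -> : m ^+ 2 * L = 2 * m * I - m ^+ 2 * L by rewrite -mL; ring.
lra.
Qed.

Definition Pop : op R := fun f _ => ip f one.

Lemma sqnorm_cst (k : R[i]) : sqnorm (fun _ => k) = nrm2 k * (2 * pi).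
Proof. rewrite /sqnorm (_ : abs2T _ = fun _ => nrm2 k) //; exact: Rint_cst. Qed.

Lemma sqnormE (f : fn R) : L2 f ->
  sqnorm f = Rintegral mu D (fun t => reT f t ^+ 2) + Rintegral mu D (fun t => imT f t ^+ 2).
Proof.
move=> Hf; rewrite /sqnorm /abs2T RintD' //.
- apply: (rint_dom (g := abs2T f)) => //.
  + by case: (L2_cmeas Hf) => m1 _; apply: measurable_realfun.measurable_funX.
  + exact: L2_rint.
  + by move=> t _; rewrite ger0_norm ?sqr_ge0 //; exact: Re_le2.
- apply: (rint_dom (g := abs2T f)) => //.
  + by case: (L2_cmeas Hf) => _ m2; apply: measurable_realfun.measurable_funX.
  + exact: L2_rint.
  + by move=> t _; rewrite ger0_norm ?sqr_ge0 //; exact: Im_le2.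
Qed.

Lemma bounded_P : bounded_op Pop.
Proof.
split.
- by move=> f _; exact: L2_cst.
- move=> f g Hf Hg E; apply: aeq_eq => z; rewrite /Pop.
  apply: ip_aeq => //; try exact: L2_cmeas; try exact: cmeas_cst.
  exact: aeq_refl.
- move=> c f g Hf Hg; apply: aeq_eq => z; rewrite /Pop !ip1E.
  have rf := rint_Re Hf; have jf := rint_Im Hf; have rg := rint_Re Hg; have jg := rint_Im Hg.
  have e1 : reT (fun z => c * f z + g z) = (fun t => (Re c * reT f t + (- Im c) * imT f t) + reT g t).
    by apply/funext => t; rewrite /reT ReD ReM; ring.
  have e2 : imT (fun z => c * f z + g z) = (fun t => (Re c * imT f t + Im c * reT f t) + imT g t).
    by apply/funext => t; rewrite /imT ImD ImM; ring.
  rewrite e1 e2 !RintD' ?RintZ' //; try solve [apply: rintZ => // | apply: rintD; apply: rintZ => //].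
  by clear e1 e2; case: c => c1 c2 /=; apply/eqP; rewrite eq_complex /=; apply/andP; split; apply/eqP; ring.
- exists ((2 * pi) ^+ 2); move=> f Hf.
  rewrite sqnorm_cst ip1E sqnormE // /nrm2 /=.
  have hr := rint_Re Hf; have hi := rint_Im Hf.
  have hr2 : rint (fun t => reT f t ^+ 2).
    apply: (rint_dom (g := abs2T f)) => //.
    + by case: (L2_cmeas Hf) => m1 _; apply: measurable_realfun.measurable_funX.
    + exact: L2_rint.
    + by move=> t _; rewrite ger0_norm ?sqr_ge0 //; exact: Re_le2.
  have hi2 : rint (fun t => imT f t ^+ 2).
    apply: (rint_dom (g := abs2T f)) => //.
    + by case: (L2_cmeas Hf) => _ m2; apply: measurable_realfun.measurable_funX.
    + exact: L2_rint.
    + by move=> t _; rewrite ger0_norm ?sqr_ge0 //; exact: Im_le2.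
  have c1 := CS hr hr2; have c2 := CS hi hi2.
  have L0 : 0 < 2 * pi :> R by rewrite mulr_gt0 // pi_gt0.
  set L := 2 * pi in c1 c2 L0 *.
  rewrite expr2; nra.
Qed.

End PP.
Arguments Pop {R}.

Section Part2.
Variable R : realType.
Local Notation mu := (@lebesgue_measure R).
Local Notation D := (Tdom R).

Variable N : nat.
Variables S1 S1s S2 S2s : 'I_N -> op R.
Variable u : 'I_N -> 'I_N -> fn R.
Hypothesis H1 : cuntz S1 S1s.
Hypothesis H2 : cuntz S2 S2s.
Hypothesis HU : unitary_Linf u.
Hypothesis HL : linked S1 S2 u.

Lemma Linf_u i j : Linf (u i j).
Proof. by case: HU => H _ _. Qed.

Lemma L2_uf i j f : L2 f -> L2 (fun z => u i j z * f z).
Proof. exact: L2_Linf (Linf_u i j). Qed.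

Lemma T_mul_u i j w : L2 w -> aeq (S1s i (S2 j w)) (fun z => u i j z * w z).
Proof.
move=> Hw.
have HX : forall k, L2 (mulop (u k j) w) by move=> k; exact: L2_uf.
have E0 := HL j Hw.
have E1 := bo_aeq (cu_Ss H1 i) (bo_L2 (cu_S H2 j) Hw) (L2_sum (fun k => bo_L2 (cu_S H1 k) (HX k))) E0.
apply: aeq_trans E1 _.
exact: (@cu_pick _ _ S1 S1s H1 i (fun k => mulop (u k j) w) HX).
Qed.

Lemma S1s_expand_u i y : L2 y -> aeq (S1s i y) (fun z => \sum_j u i j z * S2s j y z).
Proof.
move=> Hy.
have HX : forall j, L2 (S2 j (S2s j y)).
  by move=> j; apply: (bo_L2 (cu_S H2 j)); apply: (bo_L2 (cu_Ss H2 j)).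
apply: aeq_trans (bo_aeq (cu_Ss H1 i) Hy (L2_sum HX) (aeq_sym (cu_sum H2 Hy))) _.
apply: aeq_trans (bo_sum (cu_Ss H1 i) HX) _.
apply: aeq_sum => j; apply: T_mul_u; exact: (bo_L2 (cu_Ss H2 j)).
Qed.

Lemma alpha2 (A : op R) f : (forall g, L2 g -> L2 (A g)) -> L2 f ->
  aeq (alphaS S2 S2s A f) (fun z => \sum_i S1 i (fun z => \sum_j u i j z * A (S2s j f) z) z).
Proof.
move=> HA Hf.
have LA : forall j, L2 (A (S2s j f)) by move=> j; apply: HA; exact: (bo_L2 (cu_Ss H2 j)).
rewrite /alphaS.
apply: aeq_trans (aeq_sum (fun j => HL j (LA j))) _.
apply: aeq_trans (aeq_eq (fun z => exchange_big _ _ _ _ _ _)) _.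
apply: aeq_sum => i; apply: aeq_sym.
apply: (bo_sum (cu_S H1 i) (F := fun j => mulop (u i j) (A (S2s j f)))).
by move=> j; apply: L2_uf.
Qed.

Lemma alpha_mul (phi : fn R) f : Linf phi -> L2 f ->
  aeq (alphaS S2 S2s (mulop phi) f) (alphaS S1 S1s (mulop phi) f).
Proof.
move=> Hp Hf.
apply: aeq_trans (alpha2 (fun g Hg => L2_Linf Hp Hg) Hf) _.
rewrite /alphaS; apply: aeq_sum => i; apply: (bo_aeq (cu_S H1 i)).
- by apply: L2_sum => j; apply: L2_uf; apply: L2_Linf => //; exact: (bo_L2 (cu_Ss H2 j)).
- by apply: L2_Linf => //; exact: (bo_L2 (cu_Ss H1 i)).
- apply: aeq_trans (aeq_mull phi (aeq_sym (S1s_expand_u i Hf))); apply: aeq_eq => z.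
  rewrite /mulop mulr_sumr; apply: eq_bigr => j _; ring.
Qed.

Lemma intertw_equiv b : intertwines b S1 S1s <-> intertwines b S2 S2s.
Proof.
split=> HI phi Hp f Hf.
- exact: (aeq_trans (alpha_mul Hp Hf) (HI phi Hp f Hf)).
- exact: (aeq_trans (aeq_sym (alpha_mul Hp Hf)) (HI phi Hp f Hf)).
Qed.

Lemma const_alpha : constant_mx u ->
  forall A : op R, bounded_op A -> opeq (alphaS S1 S1s A) (alphaS S2 S2s A).
Proof.
move=> [c Hc] A HA f Hf.
have LA : forall j, L2 (A (S2s j f)) by move=> j; apply: (bo_L2 HA); exact: (bo_L2 (cu_Ss H2 j)).
have LS : forall j, L2 (S2s j f) by move=> j; exact: (bo_L2 (cu_Ss H2 j)).
apply: aeq_sym; apply: aeq_trans (alpha2 (bo_L2 HA) Hf) _.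
rewrite /alphaS; apply: aeq_sum => i; apply: (bo_aeq (cu_S H1 i)).
- by apply: L2_sum => j; apply: L2_uf.
- by apply: (bo_L2 HA); exact: (bo_L2 (cu_Ss H1 i)).
- have E1 : aeq (fun z => \sum_j u i j z * A (S2s j f) z) (fun z => \sum_j c i j * A (S2s j f) z).
    by apply: aeq_sum => j; apply: aeq_mul => //; exact: aeq_refl.
  apply: aeq_trans E1 _.
  apply: aeq_trans (aeq_sym (bo_sum_scale HA (c i) LS)) _.
  apply: (bo_aeq HA).
  + by apply: L2_sum => j; apply: L2_scale.
  + exact: (bo_L2 (cu_Ss H1 i)).
  + apply: aeq_trans _ (aeq_sym (S1s_expand_u i Hf)).
    by apply: aeq_sum => j; apply: aeq_mul => //; [exact: aeq_sym | exact: aeq_refl].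
Qed.

Lemma alpha_const : (forall A : op R, bounded_op A -> opeq (alphaS S1 S1s A) (alphaS S2 S2s A)) ->
  constant_mx u.
Proof.
move=> Ha.
exists (fun k l => ip (u k l) one / (2 * pi)%:C) => k l.
set f := S2 l one.
have Lf : L2 f := bo_L2 (cu_S H2 l) L2_one.
have HP := bounded_P R.
have E := Ha _ HP f Lf.
have LP : forall g : fn R, L2 (Pop g).
  by move=> g; rewrite /Pop; exact: L2_cst.
have EL : aeq (S1s k (alphaS S1 S1s Pop f)) (Pop (S1s k f)).
  exact: (@cu_pick _ _ S1 S1s H1 k (fun i => Pop (S1s i f)) (fun i => LP _)).
have LW : forall i, L2 (fun z => \sum_j u i j z * Pop (S2s j f) z).
  by move=> i; apply: L2_sum => j; apply: L2_uf.
have ER : aeq (S1s k (alphaS S2 S2s Pop f)) (fun z => \sum_j u k j z * Pop (S2s j f) z).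
  apply: aeq_trans (bo_aeq (cu_Ss H1 k) (L2_alpha H2 (bo_L2 HP) Lf) (L2_sum (fun i => bo_L2 (cu_S H1 i) (LW i))) (alpha2 (bo_L2 HP) Lf)) _.
  exact: (@cu_pick _ _ S1 S1s H1 k (fun i => fun z => \sum_j u i j z * Pop (S2s j f) z) LW).
have E2 := aeq_trans (aeq_sym EL) (aeq_trans (bo_aeq (cu_Ss H1 k) (L2_alpha H1 (bo_L2 HP) Lf) (L2_alpha H2 (bo_L2 HP) Lf) E) ER).
have eL : forall z, Pop (S1s k f) z = ip (u k l) one.
  move=> z; rewrite /Pop.
  have := T_mul_u k l L2_one.
  have -> : (fun z => u k l z * one z) = u k l by apply/funext => w; rewrite /one mulr1.
  move=> T; apply: ip_aeq => //.
  - exact: (L2_cmeas (bo_L2 (cu_Ss H1 k) Lf)).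
  - exact: (L2_cmeas (L2_Linf1 (Linf_u k l))).
  - exact: (L2_cmeas L2_one).
  - exact: (L2_cmeas L2_one).
  - exact: aeq_refl.
have eR : forall j z, Pop (S2s j f) z = if j == l then (2 * pi)%:C else 0.
  move=> j z; rewrite /Pop.
  have T := cu_rel H2 j l L2_one.
  rewrite (ip_aeq _ _ _ _ T (aeq_refl _)).
  - case: (j == l); first exact: ip_one_one.
    exact: ip_zero_one.
  - exact: (L2_cmeas (bo_L2 (cu_Ss H2 j) Lf)).
  - by case: (j == l); exact: cmeas_cst.
  - exact: (L2_cmeas L2_one).
  - exact: (L2_cmeas L2_one).
apply: aeS E2 => t H Dt; have := H Dt.
rewrite eL (eq_bigr (fun j => u k j (circ t) * (if j == l then (2 * pi)%:C else 0))); last first.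
  by move=> j _; rewrite eR.
rewrite (bigD1 l) //= eqxx big1 ?addr0; last first.
  by move=> j /negPf ->; rewrite mulr0.
move=> ->.
have nz : (2 * pi)%:C != 0 :> R[i].
  by rewrite eq_complex /= negb_and gt_eqF // mulr_gt0 // pi_gt0.
by rewrite mulfK.
Qed.

End Part2.

Local Close Scope complex_scope.
Local Close Scope classical_set_scope.
Unset Implicit Arguments.

Theorem corollary5p3 (R : realType) (N : nat) (a : 'I_N -> R[i])
  (ha : forall j, `|a j| < 1) :
  (forall S1 S1s S2 S2s : 'I_N -> op R,
     cuntz S1 S1s -> cuntz S2 S2s ->
     intertwines (blaschke a) S1 S1s -> intertwines (blaschke a) S2 S2s ->
     exists u : 'I_N -> 'I_N -> fn R, unitary_Linf u /\ linked S1 S2 u) /\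
  (forall (S1 S1s S2 S2s : 'I_N -> op R) (u : 'I_N -> 'I_N -> fn R),
     cuntz S1 S1s -> cuntz S2 S2s -> unitary_Linf u -> linked S1 S2 u ->
     (intertwines (blaschke a) S1 S1s <-> intertwines (blaschke a) S2 S2s) /\
     ((forall A : op R, bounded_op A -> opeq (alphaS S1 S1s A) (alphaS S2 S2s A))
        <-> constant_mx u)).
Proof.
split.
- move=> S1 S1s S2 S2s H1 H2 I1 I2.
  exact: (part1_main H1 H2 I1 I2).
- move=> S1 S1s S2 S2s u H1 H2 HU HL; split.
  + exact: (intertw_equiv H1 H2 HU HL).
  + split.
    * exact: (alpha_const H1 H2 HU HL).
    * exact: (const_alpha H1 H2 HU HL).
Qed.
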